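(* Let $d\ge 2$ be even and fix a base $\theta>1$. Let $(u_j)_{j\ge 1}$ be a real sequence and let ${\bm v}\in\mathbb{R}^d$ with $\|{\bm v}\|_2=1$. For each $n\ge 1$ let $\boldsymbol{X}_n=\boldsymbol{u}_n{\bm v}^\top\in\mathbb{R}^{n\times d}$ with $\boldsymbol{u}_n=(u_1,\dots,u_n)^\top$. Assume: (i) there exist constants $0<c\le C<\infty$ with $c\le |u_j|\le C$ for all $j$; (ii) $\sum_{j=1}^{n-1}|u_{j+1}^2-u_j^2| = o(n)$ as $n\to\infty$; (iii) $e^{2i\theta_k}\neq 1$ for all $1\le k\le d/2$, and $e^{i(\theta_k+\theta_l)}\neq 1$, $e^{i(\theta_k-\theta_l)}\neq 1$ for all $k\neq l$. Then $$\lim_{n\to\infty}\frac{\mathrm{srank}(\mathcal{R}(\boldsymbol{X}_n))}{\mathrm{srank}(\boldsymbol{X}_n)}=\frac{2}{\max_{1\le k\le d/2}\alpha_k^2}\in[2,d],$$ where $\alpha_k:=\sqrt{v_{2k-1}^2+v_{2k}^2}$.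
   Context: RoPE action: for $\boldsymbol{X}=[\boldsymbol{x}_1,\dots,\boldsymbol{x}_n]^\top\in\mathbb{R}^{n\times d}$ ($d$ even), $\mathcal{R}(\boldsymbol{X}):=[\boldsymbol{R}_1\boldsymbol{x}_1,\dots,\boldsymbol{R}_n\boldsymbol{x}_n]^\top$, where $\boldsymbol{R}_j=\mathrm{Diag}(\boldsymbol{R}_{j,\theta_1},\dots,\boldsymbol{R}_{j,\theta_{d/2}})\in\mathbb{R}^{d\times d}$ is block diagonal with $2\times2$ blocks $\boldsymbol{R}_{j,\theta_k}=\begin{bmatrix}\cos(j\theta_k)&-\sin(j\theta_k)\\ \sin(j\theta_k)&\cos(j\theta_k)\end{bmatrix}$ and frequencies $\theta_k=\theta^{-2(k-1)/d}$, $1\le k\le d/2$, for a base $\theta>1$. The stable rank of a nonzero matrix $\boldsymbol{X}$ is $\mathrm{srank}(\boldsymbol{X}):=\|\boldsymbol{X}\|_F^2/\|\boldsymbol{X}\|_2^2$, where $\|\cdot\|_F$ is the Frobenius norm and $\|\cdot\|_2$ the spectral norm. *)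

(* Defs.v *)
From HB Require Import structures.
From mathcomp Require Import all_boot all_order all_algebra.
From mathcomp Require Import all_classical all_reals all_analysis.
Set Implicit Arguments. Unset Strict Implicit. Unset Printing Implicit Defensive.
Import Order.TTheory GRing.Theory Num.Theory.
Import numFieldNormedType.Exports.
Local Open Scope classical_set_scope.
Local Open Scope ring_scope.

Section RoPE.
Variable R : realType.

(* RoPE frequency theta_{k+1} = base^(-2k/d), for 0-indexed k (so theta_k with k = 1..d/2). *)
Definition freq (base : R) (d k : nat) : R := base `^ (- ((2 * k)%:R / d%:R)).

(* The d x d block-diagonal rotation matrix R_j: index p belongs to block p./2
   (0-indexed; coordinates 2k-1,2k of the paper are 2k-2,2k-1 here). *)
Definition rotmx (base : R) (d j : nat) : 'M[R]_d :=
  \matrix_(p < d, q < d)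
    if p./2 == q./2 then
      let a := j%:R * freq base d p./2 in
      if ~~ odd p then (if ~~ odd q then cos a else - sin a)
      else (if ~~ odd q then sin a else cos a)
    else 0.

(* RoPE action: row i (0-indexed, i.e. x_{i+1}) is replaced by R_{i+1} x_{i+1}. *)
Definition rope (base : R) (n d : nat) (X : 'M[R]_(n, d)) : 'M[R]_(n, d) :=
  \matrix_(i < n, p < d) \sum_(q < d) rotmx base d i.+1 p q * X i q.

Definition vnorm (d : nat) (x : 'cV[R]_d) : R := Num.sqrt (\sum_(i < d) x i 0 ^+ 2).

Definition frobnorm (n d : nat) (X : 'M[R]_(n, d)) : R :=
  Num.sqrt (\sum_(i < n) \sum_(j < d) X i j ^+ 2).

Definition specnorm (n d : nat) (X : 'M[R]_(n, d)) : R :=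
  sup [set y | exists x : 'cV[R]_d, vnorm x = 1 /\ y = vnorm (X *m x)].

Definition srank (n d : nat) (X : 'M[R]_(n, d)) : R :=
  frobnorm X ^+ 2 / specnorm X ^+ 2.

Definition Xmat (u : nat -> R) (d : nat) (v : 'cV[R]_d) (n : nat) : 'M[R]_(n, d) :=
  \matrix_(i < n, p < d) (u i.+1 * v p 0).

(* alpha_{k+1} = sqrt(v_{2k+1}^2 + v_{2k+2}^2) (paper indexing), for 0-indexed k. *)
Definition alpha (d : nat) (v : 'cV[R]_d) (k : nat) : R :=
  Num.sqrt (\sum_(i < d | i./2 == k) v i 0 ^+ 2).

(* e^{i x} <> 1 *)
Definition expi_ne1 (x : R) : Prop := ~ (cos x = 1 /\ sin x = 0).

End RoPE.

(* Main.v *)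
Require Import Defs.
From HB Require Import structures.
From mathcomp Require Import all_boot all_order all_algebra.
From mathcomp Require Import all_classical all_reals all_analysis.
From mathcomp Require Import ring lra.
Import Order.TTheory GRing.Theory Num.Theory.
Import numFieldNormedType.Exports.
Local Open Scope classical_set_scope.
Local Open Scope ring_scope.
Set Implicit Arguments. Unset Strict Implicit. Unset Printing Implicit Defensive.


Section H.
Variable R : realType.

Lemma sum_double (G : nat -> R) h :
  \sum_(i < h.*2) G i = \sum_(k < h) (G k.*2 + G k.*2.+1).
Proof.
elim: h => [|h IH]; first by rewrite !big_ord0.
rewrite doubleS !big_ord_recr /= IH addrA.
done.
Qed.

Lemma sum_if_eq n K (F : nat -> R) : (K < n)%N ->
  \sum_(k < n) (if K == k then F k else 0) = F K.
Proof.
move=> hK.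
rewrite -big_mkcond /=.
rewrite (eq_bigl (fun k : 'I_n => (k : nat) == K)); last by move=> k; rewrite eq_sym.
by rewrite big_ord1_eq hK.
Qed.

Lemma abel_id (w g : nat -> R) n :
  \sum_(i < n.+1) w i.+1 * (g i.+1 - g i) =
  w n.+1 * g n.+1 - w 1%N * g 0%N - \sum_(1 <= j < n.+1) (w j.+1 - w j) * g j.
Proof.
elim: n => [|n IH].
  by rewrite big_ord1 big_geq // subr0 mulrBr.
rewrite [in RHS]big_nat_recr //= big_ord_recr /= IH.
rewrite mulrBr mulrBl; ring.
Qed.

Lemma abel_bound (w g : nat -> R) K n :
  (forall j, (1 <= j)%N -> `|w j| <= K) -> (forall j, `|g j| <= 1) ->
  `|\sum_(i < n.+1) w i.+1 * (g i.+1 - g i)| <=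
  2 * K + \sum_(1 <= j < n.+1) `|w j.+1 - w j|.
Proof.
move=> hw hg; rewrite abel_id.
have h1 : `|w n.+1 * g n.+1| <= K.
  rewrite normrM -[K]mulr1; apply: ler_pM => //; exact: hw.
have h2 : `|w 1%N * g 0%N| <= K.
  rewrite normrM -[K]mulr1; apply: ler_pM => //; exact: hw.
have h3 : `|\sum_(1 <= j < n.+1) (w j.+1 - w j) * g j| <= \sum_(1 <= j < n.+1) `|w j.+1 - w j|.
  apply: le_trans (ler_norm_sum _ _ _) _.
  apply: ler_sum => j _; rewrite normrM -[X in _ <= X]mulr1; apply: ler_pM => //.
apply: le_trans (ler_normB _ _) _.
apply: le_trans (lerD (ler_normB _ _) (lexx _)) _.
lra.
Qed.

Lemma cvg_sum0 n (F : 'I_n -> nat -> R) :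
  (forall k, F k @ \oo --> (0:R)) -> (fun N => \sum_(k < n) F k N) @ \oo --> (0:R).
Proof.
elim: n F => [|n IH] F hF.
  by under eq_fun do rewrite big_ord0; exact: cvg_cst.
under eq_fun do rewrite big_ord_recr /=.
have H := cvgD (IH (fun k => F (widen_ord (leqnSn n) k)) (fun k => hF _)) (hF ord_max).
rewrite addr0 in H; exact: H.
Qed.

End H.


Section H2.
Variable R : realType.

Definition Ssum (u : nat -> R) N := \sum_(i < N) u i.+1 ^+ 2.
Definition Wc (u : nat -> R) (f : R) N :=
  (\sum_(i < N) u i.+1 ^+ 2 * cos (i.+1%:R * f)) / Ssum u N.
Definition Ws (u : nat -> R) (f : R) N :=
  (\sum_(i < N) u i.+1 ^+ 2 * sin (i.+1%:R * f)) / Ssum u N.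

Lemma half_sin_neq0 (f : R) : expi_ne1 f -> sin (f / 2) != 0.
Proof.
move=> hf; apply/negP => /eqP hs; apply: hf.
have -> : f = f / 2 + f / 2 by field.
rewrite cosD sinD hs; split; last by ring.
have := cos2Dsin2 (f / 2); rewrite hs => h; nra.
Qed.

Lemma sqr_le_C (c C x : R) : 0 < c -> c <= `|x| <= C -> c ^+ 2 <= x ^+ 2 <= C ^+ 2.
Proof.
move=> hc /andP [h1 h2]; rewrite -(real_normK (num_real x)).
have h0 : 0 <= `|x| by [].
apply/andP; split; nra.
Qed.

Lemma Ssum_ge (u : nat -> R) (c C : R) N : 0 < c ->
  (forall j : nat, (1 <= j)%N -> c <= `|u j| <= C) -> N%:R * c ^+ 2 <= Ssum u N.
Proof.
move=> hc hu; rewrite /Ssum.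
have -> : N%:R * c ^+ 2 = \sum_(i < N) c ^+ 2 by rewrite sumr_const card_ord mulr_natl.
apply: ler_sum => i _.
by case/andP: (sqr_le_C hc (hu _ (ltn0Sn i))) => a _.
Qed.

Lemma avg_bound (u : nat -> R) (c C : R) (F : nat -> R) (g : nat -> R) (t : R) n :
  0 < c -> (forall j : nat, (1 <= j)%N -> c <= `|u j| <= C) ->
  (forall j, `|g j| <= 1) -> t != 0 ->
  (forall i : nat, t * F i.+1 = g i.+1 - g i) ->
  `|(\sum_(i < n.+1) u i.+1 ^+ 2 * F i.+1) / Ssum u n.+1| <=
  (2 * C ^+ 2 * n.+1%:R^-1 +
   (\sum_(1 <= j < n.+1) `|u j.+1 ^+ 2 - u j ^+ 2|) / n.+1%:R) / (`|t| * c ^+ 2).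
Proof.
move=> hc hu hg ht hF.
have hS := @Ssum_ge u c C n.+1 hc hu.
have hn : 0 < n.+1%:R :> R by [].
have hS0 : 0 < Ssum u n.+1 by apply: lt_le_trans hS; apply: mulr_gt0 => //; exact: exprn_gt0.
have hab := @abel_bound R (fun j => u j ^+ 2) g (C ^+ 2) n _ hg.
have hw : forall j, (1 <= j)%N -> `|u j ^+ 2| <= C ^+ 2.
  move=> j hj; rewrite ger0_norm ?sqr_ge0 //.
  by case/andP: (sqr_le_C hc (hu _ hj)).
move: (hab hw) => {}hab.
have eq1 : \sum_(i < n.+1) u i.+1 ^+ 2 * (g i.+1 - g i) =
   t * \sum_(i < n.+1) u i.+1 ^+ 2 * F i.+1.
  rewrite mulr_sumr; apply: eq_bigr => i _; rewrite -hF; ring.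
rewrite eq1 normrM in hab.
set V := \sum_(1 <= j < n.+1) _ in hab *.
set X := \sum_(i < n.+1) _ in hab *.
have ht0 : 0 < `|t| by rewrite normr_gt0.
have hc2 : 0 < c ^+ 2 by exact: exprn_gt0.
have hN : 0 < n.+1%:R * c ^+ 2 by apply: mulr_gt0.
rewrite normrM (ger0_norm (x := (Ssum u n.+1)^-1)); last by rewrite invr_ge0 ltW.
apply: le_trans (_ : `|X| * (n.+1%:R * c ^+ 2)^-1 <= _).
  apply: ler_wpM2l => //; rewrite lef_pV2 ?posrE //.
have -> : `|X| / (n.+1%:R * c ^+ 2) = (`|t| * `|X|) / (`|t| * (n.+1%:R * c ^+ 2)).
  by field; rewrite (lt0r_neq0 hc) (lt0r_neq0 ht0) addrC natr1 pnatr_eq0.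
have -> : (2 * C ^+ 2 * n.+1%:R^-1 + V / n.+1%:R) / (`|t| * c ^+ 2) =
   (2 * C ^+ 2 + V) / (`|t| * (n.+1%:R * c ^+ 2)).
  by field; rewrite (lt0r_neq0 hc) (lt0r_neq0 ht0) addrC natr1 pnatr_eq0.
apply: ler_wpM2r => //; rewrite invr_ge0; apply: ltW; exact: mulr_gt0.
Qed.

Lemma avg_cvg0 (u : nat -> R) (c C : R) (F g : nat -> R) (t : R) :
  0 < c -> (forall j : nat, (1 <= j)%N -> c <= `|u j| <= C) ->
  (fun n : nat => (\sum_(1 <= j < n) `|u j.+1 ^+ 2 - u j ^+ 2|) / n%:R)
            @ \oo --> (0 : R) ->
  (forall j, `|g j| <= 1) -> t != 0 ->
  (forall i : nat, t * F i.+1 = g i.+1 - g i) ->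
  (fun N => (\sum_(i < N) u i.+1 ^+ 2 * F i.+1) / Ssum u N) @ \oo --> (0:R).
Proof.
move=> hc hu hvar hg ht hF.
rewrite -cvg_shiftS /=.
have hv' := hvar; rewrite -cvg_shiftS /= in hv'.
pose e n := (2 * C ^+ 2 * n.+1%:R^-1 +
   (\sum_(1 <= j < n.+1) `|u j.+1 ^+ 2 - u j ^+ 2|) / n.+1%:R) / (`|t| * c ^+ 2).
have he : e @ \oo --> (0:R).
  have H : e @ \oo --> (2 * C ^+ 2 * 0 + 0) / (`|t| * c ^+ 2).
    apply: cvgMl; apply: cvgD => //; apply: cvgMr; exact: cvg_harmonic.
  by rewrite mulr0 add0r mul0r in H.
apply: (@squeeze_cvgr _ _ _ _ (fun n => - e n) e); last exact: he.
  apply: nearW => n; rewrite -ler_norml; exact: avg_bound.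
have H := cvgN he; rewrite oppr0 in H; exact: H.
Qed.

Lemma Wc_cvg0 (u : nat -> R) (c C : R) (f : R) :
  0 < c -> (forall j : nat, (1 <= j)%N -> c <= `|u j| <= C) ->
  (fun n : nat => (\sum_(1 <= j < n) `|u j.+1 ^+ 2 - u j ^+ 2|) / n%:R)
            @ \oo --> (0 : R) -> expi_ne1 f ->
  Wc u f @ \oo --> (0:R) /\ Ws u f @ \oo --> (0:R).
Proof.
move=> hc hu hvar hf.
have hs := half_sin_neq0 hf.
have e1 : forall i : nat, i%:R * f + f / 2 = i.+1%:R * f - f / 2.
  by move=> i; rewrite -[i.+1%:R]natr1 mulrDl mul1r; field.
split.
  apply: (@avg_cvg0 u c C (fun j => cos (j%:R * f)) (fun j => sin (j%:R * f + f / 2))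
            (2 * sin (f / 2))) => //.
  - by move=> j; exact: sin_max.
  - by rewrite mulf_neq0 // pnatr_eq0.
  - by move=> i /=; rewrite (e1 i) sinD sinB; ring.
apply: (@avg_cvg0 u c C (fun j => sin (j%:R * f)) (fun j => cos (j%:R * f + f / 2))
          (- (2 * sin (f / 2)))) => //.
- by move=> j; exact: cos_max.
- by rewrite oppr_eq0 mulf_neq0 // pnatr_eq0.
- by move=> i /=; rewrite (e1 i) cosD cosB; ring.
Qed.

End H2.


Section H3.
Variable R : realType.
Variable h : nat.
Variable base : R.
Variable v : 'cV[R]_(h.*2).

Definition cf (x : 'cV[R]_(h.*2)) (p : nat) : R :=
  oapp (fun q : 'I_(h.*2) => x q 0) 0 (insub p).

Lemma cfE (x : 'cV[R]_(h.*2)) (q : 'I_(h.*2)) : x q 0 = cf x q.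
Proof. by rewrite /cf valK. Qed.

Definition th (k : nat) := freq base (h.*2) k.

Definition rv (j p : nat) : R :=
  let k := p./2 in let a := j%:R * th k in
  if ~~ odd p then cf v k.*2 * cos a - cf v k.*2.+1 * sin a
  else cf v k.*2 * sin a + cf v k.*2.+1 * cos a.

Lemma half_lt (p : 'I_(h.*2)) : (p./2 < h)%N.
Proof. by rewrite ltn_half_double. Qed.

Lemma half2 k : (k.*2)./2 = k. Proof. exact: doubleK. Qed.
Lemma half21 k : (k.*2.+1)./2 = k. Proof. by rewrite /= uphalf_double. Qed.

Lemma rot_apply j (p : 'I_(h.*2)) :
  \sum_(q < h.*2) rotmx base (h.*2) j p q * v q 0 = rv j p.
Proof.
pose G (q : nat) := (if p./2 == q./2 then
      let a := j%:R * freq base (h.*2) p./2 in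
      if ~~ odd p then (if ~~ odd q then cos a else - sin a)
      else (if ~~ odd q then sin a else cos a)
    else 0) * cf v q.
rewrite (eq_bigr (fun q : 'I_(h.*2) => G q)); last first.
  by move=> q _; rewrite mxE cfE.
rewrite sum_double.
rewrite (eq_bigr (fun k : 'I_h => if p./2 == k then
    (let a := j%:R * freq base (h.*2) p./2 in
      if ~~ odd p then cf v k.*2 * cos a - cf v k.*2.+1 * sin a
      else cf v k.*2 * sin a + cf v k.*2.+1 * cos a) else 0)); last first.
  move=> k _; rewrite /G half2 half21 odd_double /=.
  case: eqP => _ /=; last by rewrite !mul0r addr0.
  by case: (odd p) => /=; rewrite ?odd_double /=; ring.
rewrite (@sum_if_eq R h p./2 (fun k => (let a := j%:R * freq base (h.*2) p./2 in
      if ~~ odd p then cf v k.*2 * cos a - cf v k.*2.+1 * sin a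
      else cf v k.*2 * sin a + cf v k.*2.+1 * cos a))); last exact: half_lt.
by [].
Qed.


Lemma rope_entry (u : nat -> R) N (i : 'I_N) (p : 'I_(h.*2)) :
  rope base (Xmat u v N) i p = u i.+1 * rv i.+1 p.
Proof.
rewrite mxE -rot_apply mulr_sumr; apply: eq_bigr => q _.
by rewrite [X in _ * X]mxE mulrCA.
Qed.

Definition nsq (x : 'cV[R]_(h.*2)) := \sum_(k < h) (cf x k.*2 ^+ 2 + cf x k.*2.+1 ^+ 2).

Lemma normsqE (x : 'cV[R]_(h.*2)) : \sum_(p < h.*2) x p 0 ^+ 2 = nsq x.
Proof.
rewrite (eq_bigr (fun p : 'I_(h.*2) => cf x p ^+ 2)); last by move=> p _; rewrite cfE.
exact: (sum_double (fun p => cf x p ^+ 2)).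
Qed.

Lemma nsq_ge0 x : 0 <= nsq x.
Proof. by apply: sumr_ge0 => k _; apply: addr_ge0; exact: sqr_ge0. Qed.

Lemma vnorm_sq (x : 'cV[R]_(h.*2)) : vnorm x ^+ 2 = nsq x.
Proof. by rewrite /vnorm sqr_sqrtr normsqE //; exact: nsq_ge0. Qed.

Lemma vnorm1 (x : 'cV[R]_(h.*2)) : vnorm x = 1 -> nsq x = 1.
Proof. by move=> hx; rewrite -vnorm_sq hx expr1n. Qed.

Lemma rv_sq j : \sum_(p < h.*2) rv j p ^+ 2 = nsq v.
Proof.
rewrite (sum_double (fun p => rv j p ^+ 2)) /nsq; apply: eq_bigr => k _.
rewrite /rv half2 half21 /= odd_double /=.
set a := (j%:R * th k).
have -> : (cf v k.*2 * cos a - cf v k.*2.+1 * sin a) ^+ 2 +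
  (cf v k.*2 * sin a + cf v k.*2.+1 * cos a) ^+ 2 =
  (cf v k.*2 ^+ 2 + cf v k.*2.+1 ^+ 2) * (cos a ^+ 2 + sin a ^+ 2) by ring.
by rewrite cos2Dsin2 mulr1.
Qed.

Lemma frob_rope (u : nat -> R) N : nsq v = 1 ->
  frobnorm (rope base (Xmat u v N)) ^+ 2 = Ssum u N.
Proof.
move=> hv.
have E : \sum_(i < N) \sum_(p < h.*2) rope base (Xmat u v N) i p ^+ 2 = Ssum u N.
  rewrite /Ssum; apply: eq_bigr => i _.
  under eq_bigr do rewrite rope_entry exprMn.
  by rewrite -mulr_sumr rv_sq hv mulr1.
rewrite /frobnorm sqr_sqrtr E //.
by apply: sumr_ge0 => i _; exact: sqr_ge0.
Qed.

Lemma frob_X (u : nat -> R) N : nsq v = 1 ->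
  frobnorm (Xmat u v N) ^+ 2 = Ssum u N.
Proof.
move=> hv.
have E : \sum_(i < N) \sum_(p < h.*2) Xmat u v N i p ^+ 2 = Ssum u N.
  rewrite /Ssum; apply: eq_bigr => i _.
  under eq_bigr do rewrite mxE exprMn.
  by rewrite -mulr_sumr normsqE hv mulr1.
rewrite /frobnorm sqr_sqrtr E //.
by apply: sumr_ge0 => i _; exact: sqr_ge0.
Qed.

Definition Ak (x : 'cV[R]_(h.*2)) k :=
  cf x k.*2 * cf v k.*2 + cf x k.*2.+1 * cf v k.*2.+1.
Definition Bk (x : 'cV[R]_(h.*2)) k :=
  cf x k.*2.+1 * cf v k.*2 - cf x k.*2 * cf v k.*2.+1.

Definition fx (x : 'cV[R]_(h.*2)) (j : nat) :=
  \sum_(k < h) (Ak x k * cos (j%:R * th k) + Bk x k * sin (j%:R * th k)).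

Lemma ropex_entry (u : nat -> R) N (x : 'cV[R]_(h.*2)) (i : 'I_N) :
  (rope base (Xmat u v N) *m x) i 0 = u i.+1 * fx x i.+1.
Proof.
rewrite mxE.
under eq_bigr do rewrite rope_entry cfE -mulrA.
rewrite -mulr_sumr; congr (_ * _).
rewrite (sum_double (fun p => rv i.+1 p * cf x p)) /fx; apply: eq_bigr => k _.
rewrite /rv half2 half21 /= odd_double /Ak /Bk /=; ring.
Qed.

Lemma vnorm_ropex (u : nat -> R) N (x : 'cV[R]_(h.*2)) :
  vnorm (rope base (Xmat u v N) *m x) ^+ 2 =
  \sum_(i < N) u i.+1 ^+ 2 * fx x i.+1 ^+ 2.
Proof.
rewrite /vnorm sqr_sqrtr; last by apply: sumr_ge0 => i _; exact: sqr_ge0.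
by apply: eq_bigr => i _; rewrite ropex_entry exprMn.
Qed.

Lemma vnorm_Xx (u : nat -> R) N (x : 'cV[R]_(h.*2)) :
  vnorm (Xmat u v N *m x) ^+ 2 =
  Ssum u N * (\sum_(p < h.*2) v p 0 * x p 0) ^+ 2.
Proof.
rewrite /vnorm sqr_sqrtr; last by apply: sumr_ge0 => i _; exact: sqr_ge0.
rewrite /Ssum mulr_suml; apply: eq_bigr => i _; rewrite mxE.
under eq_bigr do rewrite mxE -mulrA.
by rewrite -mulr_sumr exprMn.
Qed.

End H3.


Section H4.
Variable R : realType.
Variable h : nat.
Variables (u th A B : nat -> R).

Definition cA k l := (A k * A l + B k * B l) / 2.
Definition cB k l := (A k * A l - B k * B l) / 2.
Definition cC k l := (A k * B l + B k * A l) / 2.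
Definition cD k l := (B k * A l - A k * B l) / 2.

Definition Tkl (k l : nat) N :=
  cA k l * Wc u (th k - th l) N + cB k l * Wc u (th k + th l) N +
  cC k l * Ws u (th k + th l) N + cD k l * Ws u (th k - th l) N.

Definition gx (j : nat) :=
  \sum_(k < h) (A k * cos (j%:R * th k) + B k * sin (j%:R * th k)).

Lemma quad_expand N :
  (\sum_(i < N) u i.+1 ^+ 2 * gx i.+1 ^+ 2) / Ssum u N =
  \sum_(k < h) \sum_(l < h) Tkl k l N.
Proof.
have E : forall i : nat, u i.+1 ^+ 2 * gx i.+1 ^+ 2 =
  \sum_(k < h) \sum_(l < h) (
    cA k l * (u i.+1 ^+ 2 * cos (i.+1%:R * (th k - th l))) +
    cB k l * (u i.+1 ^+ 2 * cos (i.+1%:R * (th k + th l))) +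
    cC k l * (u i.+1 ^+ 2 * sin (i.+1%:R * (th k + th l))) +
    cD k l * (u i.+1 ^+ 2 * sin (i.+1%:R * (th k - th l)))).
  move=> i; rewrite [gx _ ^+ 2]expr2 /gx mulr_suml mulr_sumr; apply: eq_bigr => k _.
  rewrite mulr_sumr mulr_sumr; apply: eq_bigr => l _.
  have e1 : i.+1%:R * (th k - th l) = i.+1%:R * th k - i.+1%:R * th l by ring.
  have e2 : i.+1%:R * (th k + th l) = i.+1%:R * th k + i.+1%:R * th l by ring.
  rewrite e1 e2 cosB sinB cosD sinD /cA /cB /cC /cD.
  by field.
under eq_bigr => i _ do rewrite E.
rewrite exchange_big /= mulr_suml; apply: eq_bigr => k _.
rewrite exchange_big /= mulr_suml; apply: eq_bigr => l _.
rewrite !big_split /= -!mulr_sumr /Tkl /Wc /Ws !mulrA -!mulrDl.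
done.
Qed.

Lemma coef_bound (a b c e : R) : a ^+ 2 <= 1 -> b ^+ 2 <= 1 -> c ^+ 2 <= 1 -> e ^+ 2 <= 1 ->
  `|(a * b + c * e) / 2| <= 1.
Proof.
move=> ha hb hc he; rewrite ler_norml.
have := sqr_ge0 (a - b); have := sqr_ge0 (a + b).
have := sqr_ge0 (c - e); have := sqr_ge0 (c + e).
rewrite !sqrrD !sqrrN => q1 q2 q3 q4.
apply/andP; split; lra.
Qed.

Lemma four_bound (a1 a2 a3 a4 x1 x2 x3 x4 : R) :
  `|a1| <= 1 -> `|a2| <= 1 -> `|a3| <= 1 -> `|a4| <= 1 ->
  `|a1 * x1 + a2 * x2 + a3 * x3 + a4 * x4| <= `|x1| + `|x2| + `|x3| + `|x4|.
Proof.
move=> h1 h2 h3 h4.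
have b : forall a x : R, `|a| <= 1 -> `|a * x| <= `|x|.
  by move=> a x ha; rewrite normrM -[X in _ <= X]mul1r; apply: ler_wpM2r.
apply: le_trans (ler_normD _ _) _; apply: lerD; last exact: b.
apply: le_trans (ler_normD _ _) _; apply: lerD; last exact: b.
apply: le_trans (ler_normD _ _) _; apply: lerD; exact: b.
Qed.

Definition Ekl (k l : 'I_h) N :=
  `|Wc u (th k - th l) N - (k == l)%:R| + `|Wc u (th k + th l) N| +
  `|Ws u (th k + th l) N| + `|Ws u (th k - th l) N|.

Definition Dn N := \sum_(k < h) \sum_(l < h) Ekl k l N.

Lemma quad_err N : (forall k : 'I_h, A k ^+ 2 <= 1 /\ B k ^+ 2 <= 1) ->
  `|\sum_(k < h) \sum_(l < h) Tkl k l N - \sum_(k < h) (A k ^+ 2 + B k ^+ 2) / 2|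
  <= Dn N.
Proof.
move=> hAB.
have M : \sum_(k < h) (A k ^+ 2 + B k ^+ 2) / 2 =
   \sum_(k < h) \sum_(l < h) (k == l)%:R * cA k l.
  apply: eq_bigr => k _.
  rewrite (bigD1 k) //= eqxx mul1r big1 ?addr0; first by rewrite /cA !expr2.
  by move=> l /negbTE hl; rewrite eq_sym hl mul0r.
rewrite M -sumrB; apply: le_trans (ler_norm_sum _ _ _) _.
apply: ler_sum => k _; rewrite -sumrB; apply: le_trans (ler_norm_sum _ _ _) _.
apply: ler_sum => l _.
have -> : Tkl k l N - (k == l)%:R * cA k l =
  cA k l * (Wc u (th k - th l) N - (k == l)%:R) + cB k l * Wc u (th k + th l) N +
  cC k l * Ws u (th k + th l) N + cD k l * Ws u (th k - th l) N.
  by rewrite /Tkl; ring.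
case: (hAB k) => hAk hBk; case: (hAB l) => hAl hBl.
apply: four_bound.
- exact: coef_bound.
- rewrite /cB -mulrN; apply: coef_bound => //; by rewrite sqrrN.
- exact: coef_bound.
- rewrite /cD -mulrN; apply: coef_bound => //; by rewrite sqrrN.
Qed.


Lemma add_cvg0 (f g : nat -> R) : f @ \oo --> (0:R) -> g @ \oo --> (0:R) ->
  (fun n => f n + g n) @ \oo --> (0:R).
Proof. by move=> hf hg; have H := cvgD hf hg; rewrite addr0 in H; exact: H. Qed.

Lemma Dn_cvg0 (c C : R) : 0 < c -> (forall j : nat, (1 <= j)%N -> c <= `|u j| <= C) ->
  (fun n : nat => (\sum_(1 <= j < n) `|u j.+1 ^+ 2 - u j ^+ 2|) / n%:R)
            @ \oo --> (0 : R) ->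
  (forall k : 'I_h, expi_ne1 (2 * th k)) ->
  (forall k l : 'I_h, k != l -> expi_ne1 (th k + th l) /\ expi_ne1 (th k - th l)) ->
  Dn @ \oo --> (0:R).
Proof.
move=> hc hu hvar h1 h2.
apply: cvg_sum0 => k; apply: cvg_sum0 => l; rewrite /Ekl.
have W0 : forall f, expi_ne1 f ->
   `|Wc u f N| @[N --> \oo] --> (0:R) /\ `|Ws u f N| @[N --> \oo] --> (0:R).
  move=> f hf; have [a b] := Wc_cvg0 hc hu hvar hf.
  by split; apply/norm_cvg0P.
case: (eqVneq k l) => [<-|hkl].
  rewrite -cvg_shiftS /=.
  have [a b] := W0 _ (h1 k).
  rewrite -cvg_shiftS /= in a; rewrite -cvg_shiftS /= in b.
  apply: (cvg_trans _ (add_cvg0 a b)); apply: near_eq_cvg; apply: nearW => n /=.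
  apply/esym.
  have hS : 0 < Ssum u n.+1.
    apply: lt_le_trans (Ssum_ge n.+1 hc hu); apply: mulr_gt0 => //; exact: exprn_gt0.
  have -> : th k + th k = 2 * th k by ring.
  rewrite subrr /Wc /Ws.
  under eq_bigr do rewrite mulr0 cos0 mulr1.
  under [X in _ + `|X / _|]eq_bigr do rewrite mulr0 sin0 mulr0.
  rewrite big1_eq mul0r normr0 addr0 -[\sum_(i < n.+1) u i.+1 ^+ 2]/(Ssum u n.+1) divff ?subrr ?normr0 ?add0r //; exact: lt0r_neq0.
under eq_fun => N do rewrite (_ : (false%:R : R) = 0) // subr0.
have [a b] := W0 _ (h2 _ _ hkl).1.
have [a' b'] := W0 _ (h2 _ _ hkl).2.
by apply: add_cvg0; [apply: add_cvg0; [apply: add_cvg0|]|].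
Qed.

End H4.


Section BM.
Variable R : realType.

Lemma bmax_recl (F : nat -> R) n :
  \big[Num.max/0]_(i < n.+1) F i = Num.max (F 0%N) (\big[Num.max/0]_(i < n) F i.+1).
Proof. by rewrite big_ord_recl; congr Num.max; apply: eq_bigr => i _; rewrite lift0. Qed.

Lemma bmax_ge n (F : nat -> R) k : (k < n)%N -> F k <= \big[Num.max/0]_(i < n) F i.
Proof.
elim: n F k => [//|n IH] F k hk; rewrite bmax_recl le_max.
case: k hk => [|k] hk; first by rewrite lexx.
by rewrite (IH (fun i => F i.+1) k hk) orbT.
Qed.

Lemma bmax_le n (F : nat -> R) b : 0 <= b -> (forall i, (i < n)%N -> F i <= b) ->
  \big[Num.max/0]_(i < n) F i <= b.
Proof.
move=> hb; elim: n F => [F _|n IH F hF]; first by rewrite big_ord0.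
rewrite bmax_recl ge_max hF //= (IH (fun i => F i.+1)) //.
by move=> i hi; apply: hF.
Qed.

Lemma bmax_ex n (F : nat -> R) : (forall i, 0 <= F i) ->
  exists k, (k < n.+1)%N /\ \big[Num.max/0]_(i < n.+1) F i = F k.
Proof.
elim: n F => [|n IH] F hF.
  by exists 0%N; split => //; rewrite bmax_recl big_ord0 max_l.
rewrite bmax_recl.
have [k [hk ->]] := IH (fun i => F i.+1) (fun i => hF _).
case: (leP (F 0%N) (F k.+1)) => hh.
  by exists k.+1; split => //; rewrite max_r.
by exists 0%N; split => //; rewrite max_l // ltW.
Qed.

Lemma bmax_ex' n (F : nat -> R) : (0 < n)%N -> (forall i, 0 <= F i) ->
  exists k, (k < n)%N /\ \big[Num.max/0]_(i < n) F i = F k.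
Proof. by case: n => // n _; exact: bmax_ex. Qed.

End BM.

Section H5.
Variable R : realType.
Variable h : nat.
Variable base : R.
Variable v : 'cV[R]_(h.*2).

Lemma alpha_sq k : (k < h)%N -> alpha v k ^+ 2 = cf v k.*2 ^+ 2 + cf v k.*2.+1 ^+ 2.
Proof.
move=> hk; rewrite /alpha sqr_sqrtr; last by apply: sumr_ge0 => i _; exact: sqr_ge0.
rewrite big_mkcond /=.
rewrite (eq_bigr (fun p : 'I_(h.*2) => if (p : nat)./2 == k then cf v p ^+ 2 else 0));
  last by move=> p _; rewrite cfE.
rewrite (sum_double (fun p => if p./2 == k then cf v p ^+ 2 else 0)).
rewrite (eq_bigr (fun k' : 'I_h => if k == k' then cf v k'.*2 ^+ 2 + cf v k'.*2.+1 ^+ 2 else 0)).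
  by rewrite (sum_if_eq (fun k' => cf v k'.*2 ^+ 2 + cf v k'.*2.+1 ^+ 2)).
move=> k' _; rewrite half2 half21 eq_sym; case: eqP => _ //; by rewrite addr0.
Qed.

Lemma AB_sq (x : 'cV[R]_(h.*2)) k : Ak v x k ^+ 2 + Bk v x k ^+ 2 =
  (cf v k.*2 ^+ 2 + cf v k.*2.+1 ^+ 2) * (cf x k.*2 ^+ 2 + cf x k.*2.+1 ^+ 2).
Proof. rewrite /Ak /Bk; ring. Qed.

Lemma block_le (x : 'cV[R]_(h.*2)) (k : 'I_h) :
  cf x k.*2 ^+ 2 + cf x k.*2.+1 ^+ 2 <= nsq x.
Proof.
rewrite /nsq (bigD1 k) //= lerDl; apply: sumr_ge0 => i _.
by apply: addr_ge0; exact: sqr_ge0.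
Qed.


Lemma sup_sq (E : set R) (y0 b : R) : E y0 -> (forall y, E y -> 0 <= y /\ y ^+ 2 <= b) ->
  0 <= b -> y0 ^+ 2 <= sup E ^+ 2 <= b.
Proof.
move=> hy0 hE hb.
have ub : ubound E (Num.sqrt b).
  move=> y /hE [hy hyb].
  rewrite -(ger0_norm hy) -sqrtr_sqr ler_sqrt //.
have hs : has_sup E by split; [exists y0 | exists (Num.sqrt b)].
have h1 : sup E <= Num.sqrt b by apply: ge_sup => //; exists y0.
have h2 : y0 <= sup E by apply: sup_upper_bound.
have [hy0' _] := hE _ hy0.
have hsb := sqr_sqrtr hb.
have := sqrtr_ge0 b.
move=> hs0; apply/andP; split; nra.
Qed.

Lemma cf_col (F : nat -> R) p : (p < h.*2)%N ->
  cf (\col_(q < h.*2) F q) p = F p.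
Proof. by move=> hp; rewrite /cf insubT /= mxE. Qed.

Definition mainq (x : 'cV[R]_(h.*2)) := \sum_(k < h) (Ak v x k ^+ 2 + Bk v x k ^+ 2) / 2.

Definition mm := \big[Num.max/0]_(k < h) alpha v k ^+ 2.

Lemma AB_le1 (x : 'cV[R]_(h.*2)) (k : 'I_h) : nsq v = 1 -> nsq x = 1 ->
  Ak v x k ^+ 2 <= 1 /\ Bk v x k ^+ 2 <= 1.
Proof.
move=> hv hx.
have e := AB_sq x k.
have b1 := block_le v k; have b2 := block_le x k.
rewrite hv in b1; rewrite hx in b2.
have p1 : 0 <= cf v k.*2 ^+ 2 + cf v k.*2.+1 ^+ 2 by apply: addr_ge0; exact: sqr_ge0.
have p2 : 0 <= cf x k.*2 ^+ 2 + cf x k.*2.+1 ^+ 2 by apply: addr_ge0; exact: sqr_ge0.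
have q1 := sqr_ge0 (Ak v x k); have q2 := sqr_ge0 (Bk v x k).
split; nra.
Qed.

Lemma main_le (x : 'cV[R]_(h.*2)) : nsq x = 1 -> mainq x <= mm / 2.
Proof.
move=> hx; rewrite /mainq.
apply: le_trans (_ : \sum_(k < h) mm * (cf x k.*2 ^+ 2 + cf x k.*2.+1 ^+ 2) / 2 <= _).
  apply: ler_sum => k _; rewrite AB_sq -alpha_sq //.
  apply: ler_wpM2r => //; apply: ler_wpM2r; first by apply: addr_ge0; exact: sqr_ge0.
  exact: (bmax_ge (fun k => alpha v k ^+ 2)).
by rewrite -mulr_suml -mulr_sumr -/(nsq x) hx mulr1.
Qed.

Lemma Q_bound (u : nat -> R) (x : 'cV[R]_(h.*2)) N :
  nsq v = 1 -> nsq x = 1 ->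
  `|vnorm (rope base (Xmat u v N) *m x) ^+ 2 / Ssum u N - mainq x| <= Dn h u (th h base) N.
Proof.
move=> hv hx.
rewrite vnorm_ropex.
have -> : \sum_(i < N) u i.+1 ^+ 2 * fx base v x i.+1 ^+ 2 =
  \sum_(i < N) u i.+1 ^+ 2 * gx h (th h base) (Ak v x) (Bk v x) i.+1 ^+ 2 by [].
rewrite quad_expand.
apply: quad_err => k; exact: AB_le1.
Qed.

Lemma sum_alpha : nsq v = \sum_(k < h) alpha v k ^+ 2.
Proof. by apply: eq_bigr => k _; rewrite alpha_sq. Qed.

Lemma exists_xs : (0 < h)%N -> nsq v = 1 ->
  0 < mm /\ exists xs : 'cV[R]_(h.*2), nsq xs = 1 /\ mainq xs = mm / 2.
Proof.
move=> h0 hv.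
have [ks [hks hm]] := bmax_ex' (F := fun k => alpha v k ^+ 2) h0 (fun i => sqr_ge0 _).
rewrite -/mm alpha_sq // in hm.
have mpos : 0 < mm.
  rewrite lt_neqAle; apply/andP; split; last by rewrite hm; apply: addr_ge0; exact: sqr_ge0.
  apply/negP => /eqP m0.
  have : nsq v <= \sum_(k < h) mm.
    by rewrite sum_alpha; apply: ler_sum => k _; exact: (bmax_ge (fun k => alpha v k ^+ 2)).
  by rewrite -m0 big1_eq hv ler10.
split => //.
set s := Num.sqrt mm.
have s2 : s ^+ 2 = mm by rewrite sqr_sqrtr // ltW.
have s0 : s != 0 by rewrite sqrtr_eq0 -ltNge.
pose xs := \col_(q < h.*2) (if (q : nat)./2 == ks then cf v q / s else 0).
have cx0 : forall k : 'I_h, cf xs k.*2 = if ks == k then cf v k.*2 / s else 0.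
  by move=> k; rewrite /xs (cf_col (fun q => if q./2 == ks then cf v q / s else 0))
    ?ltn_double // half2 eq_sym.
have cx1 : forall k : 'I_h, cf xs k.*2.+1 = if ks == k then cf v k.*2.+1 / s else 0.
  by move=> k; rewrite /xs (cf_col (fun q => if q./2 == ks then cf v q / s else 0))
    ?ltn_Sdouble // half21 eq_sym.
exists xs; split.
  rewrite /nsq (eq_bigr (fun k : 'I_h => if ks == k then 1 else 0)).
    by rewrite (sum_if_eq (fun _ => 1)).
  move=> k _; rewrite cx0 cx1; case: eqP => [<-|_]; last by rewrite expr0n /= addr0.
  by rewrite !expr_div_n -mulrDl -hm -s2 divff // expf_neq0.
rewrite /mainq (eq_bigr (fun k : 'I_h => if ks == k then mm / 2 else 0)).
  by rewrite (sum_if_eq (fun _ => mm / 2)).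
move=> k _; rewrite /Ak /Bk cx0 cx1; case: eqP => [<-|_]; last first.
  by rewrite !mul0r addr0 subr0 expr0n /= addr0 mul0r.
have -> : cf v ks.*2.+1 / s * cf v ks.*2 - cf v ks.*2 / s * cf v ks.*2.+1 = 0.
  by ring.
rewrite expr0n /= addr0.
have -> : cf v ks.*2 / s * cf v ks.*2 + cf v ks.*2.+1 / s * cf v ks.*2.+1 = mm / s.
  by rewrite hm; field.
by rewrite expr_div_n s2 expr2 mulfK // lt0r_neq0.
Qed.


Lemma Dn_ge0 (u : nat -> R) N : 0 <= Dn h u (th h base) N.
Proof.
apply: sumr_ge0 => k _; apply: sumr_ge0 => l _; rewrite /Ekl.
by apply: addr_ge0; [apply: addr_ge0; [apply: addr_ge0|]|].
Qed.

Lemma spec_rope (u : nat -> R) N : (0 < h)%N -> nsq v = 1 -> 0 < Ssum u N ->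
  `|specnorm (rope base (Xmat u v N)) ^+ 2 / Ssum u N - mm / 2| <= Dn h u (th h base) N.
Proof.
move=> h0 hv hS.
have [mpos [xs [hxs hmain]]] := exists_xs h0 hv.
set S := Ssum u N in hS *.
set D := Dn h u (th h base) N.
have hD : 0 <= D by exact: Dn_ge0.
set M := rope base (Xmat u v N).
have QB : forall x, nsq x = 1 ->
    (mainq x - D) * S <= vnorm (M *m x) ^+ 2 <= (mainq x + D) * S.
  move=> x hx; have := Q_bound u N hv hx; rewrite -/S -/D -/M ler_norml => /andP [a b].
  set q := vnorm (M *m x) ^+ 2 in a b *.
  have e : q = q / S * S by rewrite divfK // lt0r_neq0.
  rewrite e; apply/andP; split; apply: ler_wpM2r; try exact: ltW; lra.
have vx1 : vnorm xs = 1 by rewrite /vnorm normsqE hxs sqrtr1.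
have hb : 0 <= (mm / 2 + D) * S by apply: mulr_ge0; [lra | exact: ltW].
pose E := [set y | exists x : 'cV[R]_(h.*2), vnorm x = 1 /\ y = vnorm (M *m x)].
have hE0 : E (vnorm (M *m xs)) by exists xs.
have hEy : forall y, E y -> 0 <= y /\ y ^+ 2 <= (mm / 2 + D) * S.
  move=> y [x [hx ->]]; split; first exact: sqrtr_ge0.
  have hx' := vnorm1 hx.
  have /andP [_ b] := QB x hx'.
  apply: le_trans b _; apply: ler_wpM2r; first exact: ltW.
  by have := main_le hx'; lra.
have /andP [s1 s2] := sup_sq hE0 hEy hb.
have /andP [q1 _] := QB xs hxs.
rewrite hmain in q1.
have -> : specnorm M = sup E by [].
set sp := sup E ^+ 2 in s1 s2 *.
have e : sp = sp / S * S by rewrite divfK // lt0r_neq0.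
rewrite ler_norml; apply/andP; split.
  rewrite lerBrDr ler_pdivlMr //; lra.
rewrite lerBlDr ler_pdivrMr //; lra.
Qed.


Lemma dot_le1 (x : 'cV[R]_(h.*2)) : nsq v = 1 -> nsq x = 1 ->
  (\sum_(p < h.*2) v p 0 * x p 0) ^+ 2 <= 1.
Proof.
move=> hv hx.
have E : \sum_(p < h.*2) (v p 0 ^+ 2 + x p 0 ^+ 2) / 2 = 1.
  by rewrite -mulr_suml big_split /= !normsqE hv hx; field.
have s1 : \sum_(p < h.*2) v p 0 * x p 0 <= 1.
  rewrite -E; apply: ler_sum => p _.
  have := sqr_ge0 (v p 0 - x p 0); rewrite sqrrB; lra.
have s2 : - (\sum_(p < h.*2) v p 0 * x p 0) <= 1.
  rewrite -E -sumrN; apply: ler_sum => p _.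
  have := sqr_ge0 (v p 0 + x p 0); rewrite sqrrD; lra.
set t := \sum_(p < h.*2) _ in s1 s2 *.
nra.
Qed.

Lemma spec_X (u : nat -> R) N : nsq v = 1 -> 0 <= Ssum u N ->
  specnorm (Xmat u v N) ^+ 2 = Ssum u N.
Proof.
move=> hv hS.
pose E := [set y | exists x : 'cV[R]_(h.*2), vnorm x = 1 /\ y = vnorm (Xmat u v N *m x)].
have vv : vnorm v = 1 by rewrite /vnorm normsqE hv sqrtr1.
have hE0 : E (vnorm (Xmat u v N *m v)) by exists v.
have hEy : forall y, E y -> 0 <= y /\ y ^+ 2 <= Ssum u N.
  move=> y [x [hx ->]]; split; first exact: sqrtr_ge0.
  rewrite vnorm_Xx -[X in _ <= X]mulr1; apply: ler_wpM2l => //.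
  exact: dot_le1 (vnorm1 hx).
have /andP [s1 s2] := sup_sq hE0 hEy hS.
have -> : specnorm (Xmat u v N) = sup E by [].
apply/eqP; rewrite eq_le s2 /=.
apply: le_trans s1; rewrite vnorm_Xx.
have -> : \sum_(p < h.*2) v p 0 * v p 0 = 1 by rewrite -hv -normsqE; apply: eq_bigr => p _; rewrite expr2.
by rewrite expr1n mulr1.
Qed.

End H5.

Unset Implicit Arguments. Set Strict Implicit. Set Printing Implicit Defensive.

Theorem theorem1 (R : realType) (d : nat) (base : R) (u : nat -> R) (v : 'cV[R]_d)
  (hd : (2 <= d)%N) (hev : ~~ odd d) (hbase : 1 < base)
  (hv : vnorm v = 1)
  (hbd : exists c C : R, 0 < c /\ c <= C /\
           forall j : nat, (1 <= j)%N -> c <= `|u j| <= C)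
  (hvar : (fun n : nat => (\sum_(1 <= j < n) `|u j.+1 ^+ 2 - u j ^+ 2|) / n%:R)
            @ \oo --> (0 : R))
  (hnr1 : forall k : nat, (k < d./2)%N -> expi_ne1 (2 * freq base d k))
  (hnr2 : forall k l : nat, (k < d./2)%N -> (l < d./2)%N -> k <> l ->
            expi_ne1 (freq base d k + freq base d l) /\
            expi_ne1 (freq base d k - freq base d l)) :
  let L := 2 / (\big[Num.max/0]_(k < d./2) alpha v k ^+ 2) in
  (fun n : nat => srank (rope base (Xmat u v n)) / srank (Xmat u v n)) @ \oo --> L
  /\ 2 <= L <= d%:R.
Proof.
have [c [C [hc [hcC hu]]]] := hbd.
have [h hdh] : exists h, d = h.*2.
  by exists d./2; have e := odd_double_half d; rewrite (negbTE hev) add0n in e.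
clear hev; subst d.
rewrite doubleK in hnr1 hnr2 *.
move=> L.
have h0 : (0 < h)%N by move: hd; rewrite -(leq_double 1 h).
have nv := vnorm1 hv.
have [mpos _] := exists_xs h0 nv.
have mE : \big[Num.max/0]_(k < h) alpha v k ^+ 2 = mm v by [].
rewrite /L mE.
split; last first.
  have m1 : mm v <= 1.
    apply: (bmax_le (F := fun k => alpha v k ^+ 2)) => // k hk; rewrite alpha_sq //.
    have := block_le v (Ordinal hk); by rewrite nv.
  have m2 : 1 <= h%:R * mm v.
    have : nsq v <= \sum_(k < h) mm v.
      by rewrite sum_alpha; apply: ler_sum => k _; apply: (bmax_ge (fun k => alpha v k ^+ 2)).
    by rewrite sumr_const card_ord nv mulr_natl.
  rewrite -addnn natrD; apply/andP; split.
    rewrite ler_pdivlMr //; lra.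
  rewrite ler_pdivrMr //; lra.
rewrite -cvg_shiftS /=.
have SE : forall n, 0 < Ssum u n.+1.
  move=> n; apply: lt_le_trans (@Ssum_ge R u c C n.+1 hc hu); apply: mulr_gt0 => //; exact: exprn_gt0.
have key : (fun n => srank (rope base (Xmat u v n.+1)) / srank (Xmat u v n.+1)) =
   (fun n => (specnorm (rope base (Xmat u v n.+1)) ^+ 2 / Ssum u n.+1)^-1).
  apply: funext => n; rewrite /srank frob_rope // frob_X // spec_X ?divff ?divr1 ?invf_div //.
    exact: lt0r_neq0.
  exact: ltW.
rewrite key.
have h1 : forall k : 'I_h, expi_ne1 (2 * th h base k) by move=> k; exact: hnr1.
have h2 : forall k l : 'I_h, k != l -> expi_ne1 (th h base k + th h base l) /\
    expi_ne1 (th h base k - th h base l).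
  by move=> k l /eqP kl; apply: hnr2 => // e; apply: kl; exact: val_inj.
have hD := Dn_cvg0 hc hu hvar h1 h2.
rewrite -cvg_shiftS /= in hD.
have g_cvg : (fun n => specnorm (rope base (Xmat u v n.+1)) ^+ 2 / Ssum u n.+1) @ \oo --> mm v / 2.
  apply: (@squeeze_cvgr _ _ _ _ (fun n => mm v / 2 - Dn h u (th h base) n.+1)
     (fun n => mm v / 2 + Dn h u (th h base) n.+1)).
  - apply: nearW => n; have := spec_rope base h0 nv (SE n).
    by rewrite ler_norml => /andP [a b]; apply/andP; split; lra.
  - have H := cvgB (cvg_cst (mm v / 2)) hD; rewrite subr0 in H; exact: H.
  - have H := cvgD (cvg_cst (mm v / 2)) hD; rewrite addr0 in H; exact: H.
have hm2 : mm v / 2 != 0 by apply: lt0r_neq0; lra.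
rewrite -invf_div; exact: (cvgV hm2 g_cvg).
Qed.
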